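(* Let $t=B(r,t_1,\dots,t_k)$ be a rooted tree with vertex set $I$, $k\geq1$. Then the interval $[\widehat{0},t]$ in $\Pi_{\operatorname{NAP}}(I)$ is isomorphic to the product over $j\in\{1,\dots,k\}$ of the posets $[\widehat{0},B(r,t_j)]$ (each taken in $\Pi_{\operatorname{NAP}}$ of the vertex set of $B(r,t_j)$).
   Context: $B(r,t_1,\dots,t_k)$ denotes the rooted tree obtained from rooted trees $t_1,\dots,t_k$ on disjoint vertex sets by adding a new vertex $r$, which becomes the root, and an edge from $r$ to the root of each $t_i$. $\Pi_{\operatorname{NAP}}(I)$ is the set of forests of rooted trees whose vertex set is exactly $I$, partially ordered as follows: $y$ covers $x$ iff $y$ is obtained from $x$ by adding an edge from the root of one component of $x$ to the root of another component (the latter root remaining the root); $\leq$ is the reflexive–transitive closure. $\widehat{0}$ is the forest of one-vertex trees. *)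

(* Defs.v *)
From Stdlib Require Import Relations.
From mathcomp Require Import all_boot.
Set Implicit Arguments. Unset Strict Implicit. Unset Printing Implicit Defensive.

(* A (rooted) forest whose vertices live in an ambient finite type T is encoded
   by its parent function: f x = Some y means y is the parent of x,
   f x = None means x is a root (or x is not a vertex). *)
Definition pforest (T : finType) := {ffun T -> option T}.

Section NAP.
Variable T : finType.

Definition anc (f : pforest T) (n : nat) (x : T) : option T :=
  iter n (fun o => obind f o) (Some x).

Definition is_forest (I : {set T}) (f : pforest T) : Prop :=
  (forall x, x \notin I -> f x = None) /\
  (forall x y, f x = Some y -> y \in I) /\
  (forall x, x \in I -> exists n, anc f n x = None).

Definition roots (I : {set T}) (f : pforest T) : {set T} :=
  [set x in I | f x == None].

Definition is_tree (I : {set T}) (f : pforest T) : Prop :=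
  is_forest I f /\ #|roots I f| = 1.

Definition zero_forest : pforest T := [ffun _ => None].

Definition nap_cover (I : {set T}) (x y : pforest T) : Prop :=
  is_forest I x /\ is_forest I y /\
  exists a b, a \in I /\ b \in I /\ a != b /\ x a = None /\ x b = None /\
    y = [ffun v => if v == a then Some b else x v].

Definition nap_le (I : {set T}) (x y : pforest T) : Prop :=
  is_forest I x /\ is_forest I y /\ clos_refl_trans _ (nap_cover I) x y.

Definition nap_interval (I : {set T}) (t x : pforest T) : Prop :=
  nap_le I zero_forest x /\ nap_le I x t.

(* B(r, t_1, ..., t_k): trees t_j with vertex sets V j *)
Definition graft (k : nat) (r : T) (V : 'I_k -> {set T})
    (ts : 'I_k -> pforest T) : pforest T :=
  [ffun x => match [pick j | x \in V j] with
             | Some j => if ts j x is Some y then Some y else Some r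
             | None => None
             end].

Definition graft_vertices (k : nat) (r : T) (V : 'I_k -> {set T}) : {set T} :=
  r |: \bigcup_(j < k) V j.

End NAP.

(* Main.v *)
Require Import Defs.
From Stdlib Require Import Relations.
From mathcomp Require Import all_boot.
Set Implicit Arguments. Unset Strict Implicit. Unset Printing Implicit Defensive.

Definition Cle (T : finType) (x y : pforest T) : Prop :=
  (forall v p, x v = Some p -> y v = Some p) /\
  (forall v w, x v != None -> y w = Some v -> x w = Some v).

Lemma Cle_refl (T : finType) (x : pforest T) : Cle x x.
Proof. by split. Qed.

Lemma Cle_trans (T : finType) (x y z : pforest T) : Cle x y -> Cle y z -> Cle x z.
Proof.
move=> [H1 H2] [K1 K2]; split; first by move=> v p /H1 /K1.
move=> v w Hv Hz; apply: H2 => //; apply: K2 Hz.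
by case E: (x v) Hv => [p|] // _; rewrite (H1 _ _ E).
Qed.

Lemma cover_Cle (T : finType) (I : {set T}) (x y : pforest T) :
  nap_cover I x y -> Cle x y.
Proof.
move=> [_ [_ [a [b [Ha [Hb [Hab [Hxa [Hxb ->]]]]]]]]]; split.
- move=> v p Hv; rewrite ffunE; case: eqP => [Eva|//].
  by rewrite Eva Hxa in Hv.
- move=> v w Hv; rewrite ffunE; case: eqP => [_ [Evb]|//].
  by rewrite -Evb Hxb in Hv.
Qed.

Lemma rt_Cle (T : finType) (I : {set T}) (x y : pforest T) :
  clos_refl_trans _ (nap_cover I) x y -> Cle x y.
Proof.
elim=> [a b /cover_Cle //| a | a b c _ H1 _ H2]; first exact: Cle_refl.
exact: Cle_trans H1 H2.
Qed.

Lemma anc_S (T : finType) (f : pforest T) n v :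
  anc f n.+1 v = if f v is Some p then anc f n p else None.
Proof.
rewrite /anc iterSr /=; case: (f v) => [p|] //.
by elim: n => //= n ->.
Qed.

Lemma anc_Sr (T : finType) (f : pforest T) n v :
  anc f n.+1 v = obind f (anc f n v).
Proof. by rewrite /anc iterS. Qed.

Lemma anc_sub (T : finType) (f g : pforest T) :
  (forall v p, f v = Some p -> g v = Some p) ->
  forall n v, anc f n v = None \/ anc f n v = anc g n v.
Proof.
move=> Hfg; elim=> [|n IH] v; first by right.
rewrite !anc_Sr; case: (IH v) => ->; first by left.
case: (anc g n v) => [u|] /=; last by left.
by case E: (f u) => [p|]; [right; rewrite (Hfg _ _ E)| left].
Qed.

Lemma forest_sub (T : finType) (I : {set T}) (f g : pforest T) :
  is_forest I g -> (forall v p, f v = Some p -> g v = Some p) -> is_forest I f.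
Proof.
move=> [G1 [G2 G3]] Hfg; split; [|split].
- move=> v /G1; case E: (f v) => [p|] //; by rewrite (Hfg _ _ E).
- by move=> v p /Hfg /G2.
- move=> v /G3 [n Hn]; exists n.
  by case: (anc_sub Hfg n v) => // ->.
Qed.

Lemma forest0 (T : finType) (I : {set T}) : is_forest I (zero_forest T).
Proof.
split; [|split].
- by move=> v _; rewrite ffunE.
- by move=> v p; rewrite ffunE.
- by move=> v _; exists 1; rewrite /anc /= ffunE.
Qed.

Lemma up_edge (T : finType) (x y : pforest T) :
  Cle x y -> forall n w, anc y n w = None -> x w = None -> y w <> None ->
  exists w' v', [/\ x w' = None, y w' = Some v' & y v' = None].
Proof.
move=> [_ C2]; elim=> [|n IH] w //.
rewrite anc_S; case Ey: (y w) => [v|] // Ha Hx _.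
case Ev: (y v) => [u|]; last by exists w, v.
apply: (IH v) => //; last by rewrite Ev.
case Exv: (x v) => [q|] //.
have: x w = Some v by apply: C2 => //; rewrite Exv.
by rewrite Hx.
Qed.

Lemma Cle_rt (T : finType) (I : {set T}) (x y : pforest T) :
  is_forest I x -> is_forest I y -> Cle x y ->
  clos_refl_trans _ (nap_cover I) x y.
Proof.
move=> Fx.
move: {2}#|[set u | y u != x u]| (leqnn #|[set u | y u != x u]|) => m.
elim: m y => [|M IHM] y Hm Fy Cxy.
- have -> : y = x.
    apply/ffunP => u; apply/eqP; apply/negPn/negP => Hu.
    have : u \in [set u | y u != x u] by rewrite inE.
    by move=> Hu'; move: Hm; rewrite leqn0 cards_eq0 => /eqP E; rewrite E inE in Hu'.
  by apply: rt_refl.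
- case: (set_0Vmem [set u | y u != x u]) => [E|[w0]].
  + have -> : y = x.
      apply/ffunP => u; apply/eqP; apply/negPn/negP => Hu.
      have : u \in [set u | y u != x u] by rewrite inE.
      by rewrite E inE.
    by apply: rt_refl.
  rewrite inE => Hw0.
  have Hx0 : x w0 = None.
    case E: (x w0) Hw0 => [p|] //; by rewrite (Cxy.1 _ _ E) eqxx.
  have Hy0 : y w0 <> None by move=> E; rewrite E Hx0 in Hw0.
  have Iw0 : w0 \in I.
    apply/negPn/negP => /(Fy.1) E; exact: Hy0 E.
  have [n Hn] := Fy.2.2 _ Iw0.
  have [w [v [Hxw Hyw Hyv]]] := up_edge Cxy Hn Hx0 Hy0.
  pose y' : pforest T := [ffun u => if u == w then None else y u].
  have Sub : forall u p, y' u = Some p -> y u = Some p.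
    by move=> u p; rewrite ffunE; case: eqP.
  have Fy' : is_forest I y' := forest_sub Fy Sub.
  have Cxy' : Cle x y'.
    split.
    * move=> u p Hu; rewrite ffunE; case: eqP => [Euw|]; last by move=> _; apply: Cxy.1.
      by rewrite Euw Hxw in Hu.
    * by move=> u u' Hu /Sub; apply: Cxy.2.
  have Hwv : w != v by apply/eqP => E; rewrite -E Hyw in Hyv.
  apply: rt_trans (IHM y' _ Fy' Cxy') (rt_step _ _ _ _ _).
  + have Hsub : [set u | y' u != x u] \subset [set u | y u != x u] :\ w.
      apply/subsetP => u; rewrite !inE ffunE; case: (u =P w) => [->|/eqP Hne].
        by rewrite Hxw.
      by move=> ->; rewrite andbT.
    have Hc := cardsD1 w [set u | y u != x u].
    have Hw : w \in [set u | y u != x u] by rewrite inE Hyw Hxw.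
    rewrite Hw in Hc.
    have := subset_leq_card Hsub.
    move: Hm; rewrite Hc add1n ltnS => Hm H; exact: leq_trans H Hm.
  + split; first exact: Fy'; split; first exact: Fy.
    exists w, v; split; first by apply/negPn/negP => /(Fy.1); rewrite Hyw.
    split; first by apply: Fy.2.1 Hyw.
    split; first exact: Hwv.
    split; first by rewrite ffunE eqxx.
    split; first by rewrite ffunE eq_sym (negbTE Hwv) Hyv.
    apply/ffunP => u; rewrite !ffunE; case: eqP => [->|//]; exact: Hyw.
Qed.

Lemma nap_leP (T : finType) (I : {set T}) (x y : pforest T) :
  nap_le I x y <-> [/\ is_forest I x, is_forest I y & Cle x y].
Proof.
split; first by move=> [Fx [Fy H]]; split => //; exact: rt_Cle H.
by move=> [Fx Fy C]; split => //; split => //; exact: Cle_rt.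
Qed.

Lemma intervalP (T : finType) (I : {set T}) (t x : pforest T) :
  nap_interval I t x <-> [/\ is_forest I t, is_forest I x & Cle x t].
Proof.
split.
- by move=> [/nap_leP [_ Fx _] /nap_leP [_ Ft C]].
- move=> [Ft Fx C]; split; apply/nap_leP; split => //; first exact: forest0.
  by split => // v p; rewrite ffunE.
Qed.

Lemma anc_none (T : finType) (f : pforest T) n : iter n (fun o => obind f o) None = None.
Proof. by elim: n => //= n ->. Qed.

Lemma anc_agree (T : finType) (S : {set T}) (f g : pforest T) :
  (forall u, u \in S -> f u = g u) ->
  (forall u p, u \in S -> g u = Some p -> p \in S) ->
  forall n v, v \in S -> anc f n v = anc g n v.
Proof.
move=> Hfg Hcl; elim=> [|n IH] v Hv //.
rewrite !anc_S (Hfg _ Hv); case E: (g v) => [p|] //.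
by apply: IH; apply: Hcl E.
Qed.

Lemma anc_extend (T : finType) (f g : pforest T) :
  (forall u, f u = g u \/ (g u = None /\ exists p, f u = Some p /\ f p = None)) ->
  forall n v, anc g n v = None -> anc f n.+1 v = None.
Proof.
move=> H n v.
have P : forall m, anc f m v = anc g m v \/
   (anc g m v = None /\ (anc f m v = None \/ exists p, anc f m v = Some p /\ f p = None)).
  elim=> [|m [IH|[IHg IHf]]]; first by left.
  - rewrite !anc_Sr IH; case: (anc g m v) => [u|] /=; last by left.
    case: (H u) => [->|[Hg [p [Hf Hp]]]]; first by left.
    by right; rewrite Hg; split => //; right; exists p.
  - rewrite !anc_Sr IHg; right; split => //; left.
    by case: IHf => [->|[p [-> Hp]]].
move=> Hn; rewrite anc_Sr; case: (P n) => [E|[_ [->|[p [-> Hp]]]]] //.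
by rewrite E Hn.
Qed.

Theorem proposition6p7 (T : finType) (k : nat) (r : T)
  (V : 'I_k -> {set T}) (ts : 'I_k -> pforest T) :
  (0 < k)%N ->
  (forall j, is_tree (V j) (ts j)) ->
  (forall i j, i != j -> [disjoint V i & V j]) ->
  (forall j, r \notin V j) ->
  let I := graft_vertices r V in
  let t := graft r V ts in
  (* B(r, t_j), with vertex set {r} u V j *)
  let I_ j := graft_vertices r (fun _ : 'I_1 => V j) in
  let t_ j := graft r (fun _ : 'I_1 => V j) (fun _ : 'I_1 => ts j) in
  exists (phi : pforest T -> 'I_k -> pforest T)
         (psi : ('I_k -> pforest T) -> pforest T),
    [/\ (forall x, nap_interval I t x -> forall j, nap_interval (I_ j) (t_ j) (phi x j)),
        (forall y, (forall j, nap_interval (I_ j) (t_ j) (y j)) -> nap_interval I t (psi y)),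
        (forall x, nap_interval I t x -> psi (phi x) = x),
        (forall y, (forall j, nap_interval (I_ j) (t_ j) (y j)) ->
                   forall j, phi (psi y) j = y j) &
        (forall x y, nap_interval I t x -> nap_interval I t y ->
           (nap_le I x y <-> forall j, nap_le (I_ j) (phi x j) (phi y j)))].
Proof.
move=> Hk Htree Hdisj Hr I t I_ t_.
have uniqV : forall i j v, v \in V i -> v \in V j -> i = j.
  move=> i j v Hi Hj; apply/eqP; apply/negPn/negP => /Hdisj D.
  by rewrite (disjointFr D Hi) in Hj.
have tsout : forall j v, v \notin V j -> ts j v = None.
  by move=> j v; apply: (Htree j).1.1.
have tspar : forall j v p, ts j v = Some p -> p \in V j.
  by move=> j v p; apply: (Htree j).1.2.1.
have tin : forall j v, v \in V j ->
    t v = if ts j v is Some y then Some y else Some r.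
  move=> j v Hv; rewrite /t /graft ffunE.
  by case: pickP => [i Hi|H]; [rewrite (uniqV _ _ _ Hi Hv)| rewrite H in Hv].
have tjin : forall j v, v \in V j ->
    t_ j v = if ts j v is Some y then Some y else Some r.
  move=> j v Hv; rewrite /t_ /graft ffunE.
  by case: pickP => [i Hi|H] //; move: (H ord0); rewrite Hv.
have tout : forall v, (forall i, v \notin V i) -> t v = None.
  move=> v H; rewrite /t /graft ffunE.
  by case: pickP => [i Hi|//]; move: (H i); rewrite Hi.
have tjout : forall j v, v \notin V j -> t_ j v = None.
  move=> j v H; rewrite /t_ /graft ffunE.
  by case: pickP => [i Hi|//]; move: H; rewrite Hi.
have Ij : forall j v, (v \in I_ j) = (v == r) || (v \in V j).
  by move=> j v; rewrite /I_ /graft_vertices big_ord1 !inE.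
have II : forall v, (v \in I) = (v == r) || [exists i, v \in V i].
  move=> v; rewrite /I /graft_vertices !inE; congr (_ || _).
  apply/bigcupP/existsP => [[i _ Hi]|[i Hi]]; by exists i.
have IjI : forall j v, v \in I_ j -> v \in I.
  move=> j v; rewrite Ij II => /orP [->//|Hv].
  by apply/orP; right; apply/existsP; exists j.
have tsome : forall w v, t w = Some v ->
    exists j, w \in V j /\ (v \in V j \/ v = r).
  move=> w v; rewrite /t /graft ffunE; case: pickP => [j Hj|//].
  case E: (ts j w) => [p|] [<-]; exists j; split => //; last by right.
  by left; apply: tspar E.
have tjr : forall j, t_ j r = None by move=> j; apply: tjout.
have tjF : forall j, is_forest (I_ j) (t_ j).
  move=> j; split; [|split].
  - move=> v; rewrite Ij negb_or => /andP [_ H]; exact: tjout.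
  - move=> v p; case: (boolP (v \in V j)) => Hv; last by rewrite tjout.
    rewrite tjin //; case E: (ts j v) => [q|] [<-]; rewrite Ij.
      by rewrite (tspar _ _ _ E) orbT.
    by rewrite eqxx.
  - move=> v; rewrite Ij => /orP [/eqP ->|Hv].
      by exists 1; rewrite anc_S tjr.
    have [n Hn] := (Htree j).1.2.2 v Hv.
    exists n.+1; apply: anc_extend Hn => u.
    case: (boolP (u \in V j)) => Hu; last by left; rewrite tjout // tsout.
    rewrite tjin //; case: (ts j u) => [q|]; first by left.
    by right; split => //; exists r; split => //.
pose phi := fun (x : pforest T) (j : 'I_k) =>
  [ffun v => if v \in V j then x v else None] : pforest T.
pose psi := fun (y : 'I_k -> pforest T) =>
  [ffun v => if [pick j | v \in V j] is Some j then y j v else None] : pforest T.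
have psi_in : forall y j v, v \in V j -> psi y v = y j v.
  move=> y j v Hv; rewrite /psi ffunE.
  by case: pickP => [i Hi|H]; [rewrite (uniqV _ _ _ Hi Hv)| rewrite H in Hv].
have psi_out : forall y v, (forall i, v \notin V i) -> psi y v = None.
  move=> y v H; rewrite /psi ffunE.
  by case: pickP => [i Hi|//]; move: (H i); rewrite Hi.
have yout : forall y : 'I_k -> pforest T, (forall j, is_forest (I_ j) (y j) /\ Cle (y j) (t_ j)) ->
    forall j v, v \notin V j -> y j v = None.
  move=> y Hy j v Hv; case: (eqVneq v r) => [->|Hvr].
    case E: (y j r) => [p|] //; by move: (tjr j); rewrite ((Hy j).2.1 _ _ E).
  by apply: (Hy j).1.1; rewrite Ij negb_or Hvr.
have psiF : forall y : 'I_k -> pforest T, (forall j, is_forest (I_ j) (y j) /\ Cle (y j) (t_ j)) ->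
    is_forest I (psi y) /\ Cle (psi y) t.
  move=> y Hy; split; [split; [|split]|split].
  - move=> v; rewrite II negb_or => /andP [_ H]; apply: psi_out => i.
    by apply/negP => Hi; move/existsP: H; apply; exists i.
  - move=> v p; rewrite /psi ffunE; case: pickP => [j Hj|//] E.
    by apply: (IjI j); apply: (Hy j).1.2.1 E.
  - move=> v; rewrite II => /orP [/eqP ->|/existsP [j Hv]].
      by exists 1; rewrite anc_S psi_out.
    have Hvj : v \in I_ j by rewrite Ij Hv orbT.
    have [n Hn] := (Hy j).1.2.2 v Hvj.
    exists n; rewrite -Hn; apply: (anc_agree (S := I_ j)); last by rewrite Ij Hv orbT.
    + move=> u; rewrite Ij => /orP [/eqP ->|Hu]; last exact: psi_in.
      by rewrite psi_out // yout.
    + by move=> u p _; apply: (Hy j).1.2.1.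
  - move=> v p; rewrite /psi ffunE; case: pickP => [j Hj|//] E.
    by rewrite (tin j v Hj) -(tjin j v Hj); apply: (Hy j).2.1 E.
  - move=> v w; rewrite /psi ffunE; case: pickP => [i Hi|//] Hne.
    move=> /[dup] Htw /tsome [j [Hw [Hv|Hvr]]]; last first.
      by rewrite Hvr in Hi; move: (Hr i); rewrite Hi.
    have eij := uniqV _ _ _ Hi Hv; subst i.
    rewrite (psi_in _ j) //; apply: (Hy j).2.2 => //.
    by rewrite (tjin j w Hw) -(tin j w Hw).
have tE : t = psi t_.
  apply/ffunP => v; case: (pickP (fun j => v \in V j)) => [j Hj|H].
    by rewrite (psi_in _ j _ Hj) (tin j v Hj) (tjin j v Hj).
  by rewrite tout ?psi_out // => i; rewrite H.
have tF : is_forest I t.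
  have H : forall j, is_forest (I_ j) (t_ j) /\ Cle (t_ j) (t_ j).
    by move=> j; split; [exact: tjF| exact: Cle_refl].
  by rewrite tE; exact: (psiF t_ H).1.
have xout : forall x : pforest T, Cle x t -> forall v, (forall i, v \notin V i) -> x v = None.
  move=> x Cx v H; case E: (x v) => [p|] //; have := Cx.1 _ _ E; by rewrite tout.
have xr : forall x : pforest T, Cle x t -> x r = None.
  by move=> x Cx; apply: xout.
have phiF : forall x, is_forest I x -> Cle x t ->
    forall j, is_forest (I_ j) (phi x j) /\ Cle (phi x j) (t_ j).
  move=> x Fx Cx j; split; [split; [|split]|split].
  - move=> v; rewrite Ij negb_or => /andP [_ H]; by rewrite /phi ffunE (negbTE H).
  - move=> v p; rewrite /phi ffunE; case: ifP => [Hv E|//].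
    move: (Cx.1 _ _ E); rewrite (tin j) // Ij.
    by case E': (ts j v) => [q|] [<-]; [rewrite (tspar _ _ _ E') orbT | rewrite eqxx].
  - move=> v Hv; have [n Hn] := Fx.2.2 v (IjI _ _ Hv).
    exists n; rewrite -Hn; apply: (anc_agree (S := I_ j)) => //.
    + move=> u; rewrite Ij /phi ffunE => /orP [/eqP ->|Hu]; last by rewrite Hu.
      by rewrite (negbTE (Hr j)) xr.
    + move=> u p; rewrite Ij => /orP [/eqP ->|Hu]; first by rewrite xr.
      move=> /(Cx.1); rewrite (tin j) // Ij.
      by case E': (ts j u) => [q|] [<-]; [rewrite (tspar _ _ _ E') orbT | rewrite eqxx].
  - move=> v p; rewrite /phi ffunE; case: ifP => [Hv E|//].
    by rewrite (tjin j v Hv) -(tin j v Hv); apply: Cx.1.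
  - move=> v w Hne Htw.
    have Hw : w \in V j by apply/negPn/negP => Hw; rewrite tjout in Htw.
    move: Hne; rewrite /phi !ffunE Hw; case: ifP => [Hv Hne|//].
    rewrite (tjin j w Hw) -(tin j w Hw) in Htw; exact: Cx.2 Hne Htw.
exists phi, psi; split.
- move=> x /intervalP [_ Fx Cx] j; apply/intervalP; split; first exact: tjF.
  + exact: (phiF x Fx Cx j).1.
  + exact: (phiF x Fx Cx j).2.
- move=> y Hy; apply/intervalP.
  have Hy' : forall j, is_forest (I_ j) (y j) /\ Cle (y j) (t_ j).
    by move=> j; case/intervalP: (Hy j).
  by split => //; [exact: (psiF y Hy').1 | exact: (psiF y Hy').2].
- move=> x /intervalP [_ Fx Cx]; apply/ffunP => v; rewrite /psi ffunE.
  case: pickP => [j Hj|H]; first by rewrite /phi ffunE Hj.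
  by rewrite xout // => i; rewrite H.
- move=> y Hy j.
  have Hy' : forall j, is_forest (I_ j) (y j) /\ Cle (y j) (t_ j).
    by move=> j'; case/intervalP: (Hy j').
  apply/ffunP => v; rewrite /phi ffunE; case: ifP => [Hv|/negbT Hv].
    exact: psi_in.
  by rewrite yout.
- move=> x y /intervalP [_ Fx Cx] /intervalP [_ Fy Cy]; split.
  + move=> /nap_leP [_ _ [C1 C2]] j; apply/nap_leP.
    split; [exact: (phiF x Fx Cx j).1 | exact: (phiF y Fy Cy j).1 |].
    split.
    * move=> v p; rewrite /phi !ffunE; case: ifP => // _; exact: C1.
    * move=> v w; rewrite /phi !ffunE; case: ifP => [Hv Hne|//].
      case: ifP => [Hw|//]; exact: C2.
  + move=> H; apply/nap_leP; split => //; split.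
    * move=> v p E.
      case: (pickP (fun j => v \in V j)) => [j Hj|Hn]; last first.
        by rewrite xout in E => // i; rewrite Hn.
      have [_ _ [C1 _]] := (nap_leP _ _ _).1 (H j).
      have := C1 v p; rewrite /phi !ffunE Hj; exact.
    * move=> v w Hne Hyw.
      have [j [Hw [Hv|Hvr]]] := tsome w v (Cy.1 _ _ Hyw); last first.
        by rewrite Hvr xr in Hne.
      have [_ _ [_ C2]] := (nap_leP _ _ _).1 (H j).
      have := C2 v w; rewrite /phi !ffunE Hv Hw; apply => //.
Qed.
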